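(* Consider the second-order chemical equilibrium reaction $A + B \leftrightarrow 2C$ with equilibrium constant $K_e = [C]^2/([A][B])$, and let $X = V(K_e xy - z^2)\subset\mathbb{P}^2$, where $x,y,z$ are the coordinates corresponding to the normalized concentrations $[A]/c,[B]/c,[C]/c$ with $c=[A]+[B]+[C]>0$. Then the ML degree of $X$ is $1$ if $K_e=4$, $0$ if $K_e=0$, and $2$ for all other values of $K_e$.
   Context: Let $\mathcal{H}=\{p\in\mathbb{P}^n : p_0p_1\cdots p_n(p_0+\dots+p_n)=0\}$. For data $u=(u_0,\dots,u_n)\in\mathbb{N}^{n+1}$ let $\mathcal{L}_u = \frac{p_0^{u_0}\cdots p_n^{u_n}}{(p_0+\dots+p_n)^{u_0+\dots+u_n}}$. The maximum likelihood (ML) degree of a projective variety $X\subset\mathbb{P}^n$ is the number of complex critical points of $\mathcal{L}_u$ on $X_{\mathrm{reg}}\setminus\mathcal{H}$ for (generic) $u$, where $X_{\mathrm{reg}}$ is the set of smooth points of $X$. *)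

(* Defs.v *)
From HB Require Import structures.
From mathcomp Require Import all_boot all_order all_algebra.
From mathcomp Require Import mpoly.
Set Implicit Arguments. Unset Strict Implicit. Unset Printing Implicit Defensive.
Import Order.TTheory GRing.Theory Num.Theory.
Local Open Scope ring_scope.

(* Points of P^n are represented by nonzero vectors p : 'I_n.+1 -> C
   (homogeneous coordinates p_0,...,p_n), counted up to nonzero scaling. *)
Section MLdegree.
Variables (C : numClosedFieldType) (n : nat).

Definition hpoint := 'I_n.+1 -> C.

Definition vanishes_on (f g : {mpoly C[n.+1]}) : Prop :=
  forall p : hpoint, f.@[p] = 0 -> g.@[p] = 0.

Definition in_H (p : hpoint) : Prop :=
  (\prod_(i < n.+1) p i) * (\sum_(i < n.+1) p i) = 0.

Definition nonzero_pt (p : hpoint) : Prop := exists i, p i != 0.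

(* Jacobian criterion for the (reduced) hypersurface X = V(f):  X has
   codimension 1, so p in X is a smooth point iff some polynomial of the
   vanishing ideal I(X) has nonzero gradient at p. *)
Definition smooth_pt (f : {mpoly C[n.+1]}) (p : hpoint) : Prop :=
  [/\ nonzero_pt p, f.@[p] = 0 &
      exists g, vanishes_on f g /\ exists i, (mderiv i g).@[p] != 0].

(* Critical point of L_u = prod p_i^{u_i} / (sum p_i)^{|u|} on X_reg \ H:
   the differential of log L_u, (u_i/p_i - |u|/(sum_j p_j))_i, vanishes on the
   tangent space of (the cone over) X at p, i.e. on the common kernel of the
   gradients at p of all polynomials in I(X). *)
Definition ml_critical (f : {mpoly C[n.+1]}) (u : 'I_n.+1 -> nat) (p : hpoint)
  : Prop :=
  [/\ smooth_pt f p, ~ in_H p &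
      forall v : hpoint,
        (forall g, vanishes_on f g ->
           \sum_(i < n.+1) (mderiv i g).@[p] * v i = 0) ->
        \sum_(i < n.+1)
           ((u i)%:R / p i - (\sum_(j < n.+1) u j)%N%:R / (\sum_(j < n.+1) p j))
           * v i = 0].

Definition proj_eq (p q : hpoint) : Prop :=
  exists c : C, c != 0 /\ forall i, q i = c * p i.

Definition num_critical (f : {mpoly C[n.+1]}) (u : 'I_n.+1 -> nat) (d : nat)
  : Prop :=
  exists s : seq hpoint,
    [/\ size s = d,
        (forall k, (k < d)%N -> ml_critical f u (nth (fun=> 0) s k)),
        (forall i j, (i < d)%N -> (j < d)%N -> i <> j ->
           ~ proj_eq (nth (fun=> 0) s i) (nth (fun=> 0) s j)) &
        (forall p, ml_critical f u p ->
           exists2 k, (k < d)%N & proj_eq (nth (fun=> 0) s k) p)].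

(* The ML degree of X = V(f) equals d: for generic data u in N^{n+1}, i.e.
   for all u outside the zero set of some nonzero polynomial g, L_u has
   exactly d critical points on X_reg \ H. *)
Definition ML_degree_is (f : {mpoly C[n.+1]}) (d : nat) : Prop :=
  exists g : {mpoly C[n.+1]}, g != 0 /\
    forall u : 'I_n.+1 -> nat, g.@[fun i => (u i)%:R] != 0 -> num_critical f u d.

End MLdegree.

(* The conic K_e x y - z^2 in P^2, coordinates x = p_0, y = p_1, z = p_2. *)
Definition chem_conic (C : numClosedFieldType) (Ke : C) : {mpoly C[3]} :=
  Ke *: ('X_(0 : 'I_3) * 'X_(1 : 'I_3)) - 'X_(2 : 'I_3) ^+ 2.

(* Main.v *)
Require Import Defs.
From HB Require Import structures.
From mathcomp Require Import all_boot all_order all_algebra.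
From mathcomp Require Import mpoly.
From mathcomp Require Import ring lra.
Import Order.TTheory GRing.Theory Num.Theory.
Local Open Scope ring_scope.
Set Implicit Arguments. Unset Strict Implicit.

Lemma sum3 (V : nmodType) (F : 'I_3 -> V) : \sum_(i < 3) F i = F 0 + F 1 + F 2.
Proof. rewrite !big_ord_recl big_ord0 addr0 addrA; by congr (F _ + F _ + F _); apply/val_inj. Qed.
Lemma prod3 (C : comRingType) (F : 'I_3 -> C) : \prod_(i < 3) F i = F 0 * F 1 * F 2.
Proof. rewrite !big_ord_recl big_ord0 mulr1 mulrA; by congr (F _ * F _ * F _); apply/val_inj. Qed.
Lemma ord3P (P : 'I_3 -> Prop) : P 0 -> P 1 -> P 2 -> forall i, P i.
Proof.
move=> h0 h1 h2 [[|[|[|k]]] Hk].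
- by rewrite (_ : Ordinal Hk = 0) //; apply/val_inj.
- by rewrite (_ : Ordinal Hk = 1) //; apply/val_inj.
- by rewrite (_ : Ordinal Hk = 2) //; apply/val_inj.
- by [].
Qed.
Definition mk3 (C : Type) (a b c : C) : 'I_3 -> C := fun i => if val i == 0%N then a else if val i == 1%N then b else c.
Lemma mk3_0 C (a b c : C) : mk3 a b c 0 = a. Proof. by []. Qed.
Lemma mk3_1 C (a b c : C) : mk3 a b c 1 = b. Proof. by []. Qed.
Lemma mk3_2 C (a b c : C) : mk3 a b c 2 = c. Proof. by []. Qed.

Section Gen.
Variable (C : fieldType) (n : nat).

Lemma mderivXU (i j : 'I_n) : mderiv j ('X_i : {mpoly C[n]}) = (i == j)%:R%:MP.
Proof.
rewrite mderivX mnm1E; case: eqP => [->|_]; last by rewrite scale0r mpolyC0.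
by rewrite (_ : (U_(j) - U_(j) = 0)%MM) ?mpolyX0 ?scale1r ?mpolyC1 //; apply/mnmP => k; rewrite mnmBE subnn mnm0E.
Qed.

Lemma mpoly_ring_ind (P : {mpoly C[n]} -> Prop) :
  (forall c, P c%:MP) -> (forall i, P 'X_i) ->
  (forall p q, P p -> P q -> P (p + q)) -> (forall p q, P p -> P q -> P (p * q)) ->
  forall p, P p.
Proof.
move=> hC hX hD hM; have hXn : forall i k, P ('X_i ^+ k).
  move=> i; elim=> [|k ih]; first by rewrite expr0 -mpolyC1.
  by rewrite exprS; apply: (hM).
apply: mpolyind => [|c m p _ _ hp].
  by rewrite -mpolyC0.
apply: (hD) => //; rewrite -mul_mpolyC; apply: (hM) => //.
rewrite mpolyXE_id; apply: (big_ind P) => //; first by rewrite -mpolyC1.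
Qed.

Definition Gm (g : 'I_n -> {poly C}) (p : {mpoly C[n]}) : {poly C} := mmap (@polyC C) g p.

Lemma GmC g c : Gm g c%:MP = c%:P. Proof. by rewrite /Gm mmapC. Qed.
Lemma GmX g i : Gm g 'X_i = g i. Proof. by rewrite /Gm mmapX mmap1U. Qed.
Lemma GmD g p q : Gm g (p + q) = Gm g p + Gm g q. Proof. by rewrite /Gm mmapD. Qed.
Lemma GmM g p q : Gm g (p * q) = Gm g p * Gm g q. Proof. by rewrite /Gm rmorphM. Qed.
Lemma Gm0 g : Gm g 0 = 0. Proof. by rewrite /Gm mmap0. Qed.

Lemma Gm_horner g p t : (Gm g p).[t] = p.@[fun i => (g i).[t]].
Proof.
elim/mpoly_ring_ind: p => [c|i|p q hp hq|p q hp hq].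
- by rewrite GmC hornerC mevalC.
- by rewrite GmX mevalXU.
- by rewrite GmD hornerD mevalD hp hq.
- by rewrite GmM hornerM mevalM hp hq.
Qed.

Lemma Gm_deriv g p : (Gm g p)^`() = \sum_i Gm g (mderiv i p) * (g i)^`().
Proof.
elim/mpoly_ring_ind: p => [c|i|p q hp hq|p q hp hq].
- rewrite GmC derivC big1 // => i _; by rewrite mderivC Gm0 mul0r.
- rewrite GmX (bigD1 i) //= mderivXU eqxx GmC mul1r big1 ?addr0 // => j /negPf ne.
  by rewrite mderivXU eq_sym ne GmC mul0r.
- by rewrite GmD derivD hp hq -big_split /=; apply: eq_bigr => i _; rewrite mderivD GmD mulrDl.
- rewrite GmM derivM hp hq mulr_suml mulr_sumr -big_split /=; apply: eq_bigr => i _.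
  by rewrite mderivM GmD !GmM; ring.
Qed.

End Gen.
Lemma poly_vanish (C : numClosedFieldType) (p : {poly C}) : (forall t, p.[t] = 0) -> p = 0.
Proof.
move=> h; apply/eqP; apply/negPn/negP => nz.
suff : (size [seq (i%:R : C) | i <- iota 0 (size p)] < size p)%N by rewrite size_map size_iota ltnn.
apply: (max_poly_roots nz).
  by apply/allP => x /mapP [i _ ->]; apply/rootP.
rewrite map_inj_uniq ?iota_uniq // => i j /eqP; rewrite eqr_nat => /eqP.
by [].
Qed.

Lemma tangent (C : numClosedFieldType) n (g : {mpoly C[n]}) (ga : 'I_n -> {poly C}) :
  (forall t, g.@[fun i => (ga i).[t]] = 0) ->
  \sum_i (mderiv i g).@[fun i => (ga i).[0]] * (ga i)^`().[0] = 0.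
Proof.
move=> h; have G0 : Gm ga g = 0 by apply: poly_vanish => t; rewrite Gm_horner h.
have E := congr1 (fun q => q.[0]) (Gm_deriv ga g); rewrite /= G0 deriv0 horner0 horner_sum in E.
rewrite [RHS]E; apply: eq_bigr => i _; by rewrite hornerM Gm_horner.
Qed.
Section Conic.
Variables (C : numClosedFieldType) (Ke : C).
Local Notation F := (chem_conic Ke).

Lemma evF (p : 'I_3 -> C) : F.@[p] = Ke * (p 0 * p 1) - p 2 ^+ 2.
Proof. by rewrite /chem_conic mevalB mevalZ mevalM rmorphXn /= !mevalXU. Qed.

Lemma dF (p : 'I_3 -> C) i : (mderiv i F).@[p] =
  Ke * ((0 == i)%:R * p 1 + p 0 * (1 == i)%:R) - ((2 == i)%:R * p 2 + p 2 * (2 == i)%:R).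
Proof.
rewrite /chem_conic mderivB mderivZ (expr2 (@mpolyX 3 C _)) !mderivM !mderivXU.
by rewrite mevalB mevalZ mevalD !mevalM mevalD !mevalM !mevalC !mevalXU.
Qed.

Lemma dF0 p : (mderiv 0 F).@[p] = Ke * p 1. Proof. rewrite dF /=. ring. Qed.
Lemma dF1 p : (mderiv 1 F).@[p] = Ke * p 0. Proof. rewrite dF /=. ring. Qed.
Lemma dF2 p : (mderiv 2 F).@[p] = - (2 * p 2). Proof. rewrite dF /=. ring. Qed.


Definition crit_char (u : 'I_3 -> nat) (p : 'I_3 -> C) : Prop :=
  let a0 : C := (u 0)%:R in let a1 : C := (u 1)%:R in let a2 : C := (u 2)%:R in
  [/\ p 0 != 0, p 1 != 0, p 2 != 0, p 0 + p 1 + p 2 != 0 &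
      Ke * (p 0 * p 1) = p 2 ^+ 2 /\
      (2 * a0 + a2) * (p 0 + p 1 + p 2) = (a0 + a1 + a2) * (2 * p 0 + p 2)].

Lemma two_neq0 : (2 : C) != 0. Proof. by rewrite pnatr_eq0. Qed.

Lemma crit_to u p : ml_critical F u p -> crit_char u p.
Proof.
case=> [[_ hF _] hH hT].
rewrite evF in hF; move/eqP: hF; rewrite subr_eq0 => /eqP hF.
have hH' : (p 0 * p 1 * p 2) * (p 0 + p 1 + p 2) != 0.
  by apply/eqP => h; apply: hH; rewrite /in_H prod3 sum3.
move: hH'; rewrite !mulf_eq0 !negb_or => /andP[/andP[/andP[h0 h1] h2] hS].
split => //; split => //.
pose ga := mk3 (p 0 *: (1 + 'X) ^+ 2) (p 1)%:P (p 2 *: (1 + 'X)).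
have := hT (mk3 (2 * p 0) 0 (p 2)).
have key : forall g, vanishes_on F g ->
    \sum_(i < 3) (g^`M(i)).@[p] * mk3 (2 * p 0) 0 (p 2) i = 0.
  move=> g hg.
  have ev0 : (fun i => (ga i).[0]) =1 p.
    by apply: ord3P; rewrite /ga ?mk3_0 ?mk3_1 ?mk3_2 !(hornerZ, horner_exp, hornerD, hornerX, hornerC) /=; ring.
  have dv0 : forall i, (ga i)^`().[0] = mk3 (2 * p 0) 0 (p 2) i.
    by apply: ord3P; rewrite /ga ?mk3_0 ?mk3_1 ?mk3_2 !(derivE, hornerE) /=; ring.
  rewrite -[RHS](tangent (g := g) (ga := ga)).
    by apply: eq_bigr => i _; rewrite dv0 (meval_eq _ ev0).
  move=> t; apply: hg; rewrite evF /= /ga ?mk3_0 ?mk3_1 ?mk3_2 !(hornerZ, horner_exp, hornerD, hornerX, hornerC).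
  transitivity ((1 + t) ^+ 2 * (Ke * (p 0 * p 1) - p 2 ^+ 2)); first by ring.
  by rewrite hF subrr mulr0.
move/(_ key); rewrite !sum3 !natrD !mk3_0 !mk3_1 !mk3_2 => H.
apply/eqP; rewrite -subr_eq0; apply/eqP.
transitivity ((p 0 + p 1 + p 2) * (((u 0)%:R / p 0 - ((u 0)%:R + (u 1)%:R + (u 2)%:R) / (p 0 + p 1 + p 2)) *
   (2 * p 0) +
   ((u 1)%:R / p 1 - ((u 0)%:R + (u 1)%:R + (u 2)%:R) / (p 0 + p 1 + p 2)) * 0 +
   ((u 2)%:R / p 2 - ((u 0)%:R + (u 1)%:R + (u 2)%:R) / (p 0 + p 1 + p 2)) *
   p 2)); last by rewrite H mulr0.
by field; rewrite hS h0 h1 h2.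
Qed.

Lemma crit_from u p : crit_char u p -> ml_critical F u p.
Proof.
case=> h0 h1 h2 hS [hF E1].
split.
- split; first by exists 2.
  + by rewrite evF hF subrr.
  + exists (chem_conic Ke); split => //; exists 2; rewrite dF2 oppr_eq0 mulf_neq0 //; exact: two_neq0.
- by rewrite /in_H prod3 sum3; apply/eqP; rewrite !mulf_neq0.
move=> v hv; have L := hv (chem_conic Ke) (fun q h => h).
rewrite sum3 dF0 dF1 dF2 in L.
rewrite !sum3 !natrD.
set a0 : C := (u 0)%:R; set a1 : C := (u 1)%:R; set a2 : C := (u 2)%:R.
set S := p 0 + p 1 + p 2; set N := a0 + a1 + a2.
set A0 := a0 / p 0 - N / S; set A1 := a1 / p 1 - N / S; set A2 := a2 / p 2 - N / S.
have hA2 : A2 = - (2 * A0 * p 0) / p 2.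
  have : 2 * A0 * p 0 + A2 * p 2 = ((2 * a0 + a2) * S - N * (2 * p 0 + p 2)) / S.
    by rewrite /A0 /A2 /N; field; rewrite hS h0 h2.
  rewrite E1 subrr mul0r => /eqP; rewrite addr_eq0 => /eqP ->; field; exact: h2.
have hA1 : A1 = A0 * p 0 / p 1.
  have : A0 * p 0 + A1 * p 1 + A2 * p 2 = 0.
    by rewrite /A0 /A1 /A2 /N /S; field; rewrite hS h0 h1 h2.
  rewrite hA2 => H; apply/eqP; rewrite -subr_eq0; apply/eqP.
  transitivity ((A0 * p 0 + A1 * p 1 + - (2 * A0 * p 0) / p 2 * p 2) / p 1); last by rewrite H mul0r.
  by field; rewrite h1 h2.
have hKe : Ke = p 2 ^+ 2 / (p 0 * p 1) by rewrite -hF; field; rewrite h0 h1.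
rewrite hKe in L.
rewrite hA1 hA2.
transitivity (A0 * p 0 / p 2 ^+ 2 * (p 2 ^+ 2 / (p 0 * p 1) * p 1 * v 0 + p 2 ^+ 2 / (p 0 * p 1) * p 0 * v 1 + - (2 * p 2) * v 2)); last by rewrite L mulr0.
by field; rewrite h0 h1 h2.
Qed.

Lemma crit_iff u p : ml_critical F u p <-> crit_char u p.
Proof. by split; [apply: crit_to | apply: crit_from]. Qed.


Section Count.
Variable u : 'I_3 -> nat.
Local Notation a0 := ((u 0)%:R : C).
Local Notation a1 := ((u 1)%:R : C).
Local Notation a2 := ((u 2)%:R : C).
Definition mQ z := (2 * a1 + a2) * z ^+ 2 - Ke * (a0 - a1) * z - Ke * (2 * a0 + a2).
Definition mR z := z ^+ 2 + Ke * z + Ke.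
Definition pt z : 'I_3 -> C := mk3 (z ^+ 2 / Ke) 1 z.

Hypothesis Ke0 : Ke != 0.

Lemma pt_crit z : z != 0 -> mR z != 0 -> mQ z = 0 -> crit_char u (pt z).
Proof.
move=> z0 R0 Q0; rewrite /crit_char /pt !mk3_0 !mk3_1 !mk3_2.
split => //.
- by rewrite mulf_neq0 ?invr_eq0 ?expf_neq0.
- exact: oner_neq0.
- have -> : z ^+ 2 / Ke + 1 + z = mR z / Ke by rewrite /mR; field.
  by rewrite mulf_neq0 ?invr_eq0.
split; first by field.
apply/eqP; rewrite -subr_eq0; apply/eqP.
transitivity (- mQ z / Ke); last by rewrite Q0 oppr0 mul0r.
by rewrite /mQ; field.
Qed.

Lemma crit_pt p : crit_char u p ->
  [/\ p 2 / p 1 != 0, mR (p 2 / p 1) != 0, mQ (p 2 / p 1) = 0 & proj_eq (pt (p 2 / p 1)) p].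
Proof.
case=> h0 h1 h2 hS [hF E1].
have hp0 : p 0 = p 2 ^+ 2 / (Ke * p 1).
  by rewrite -hF; field; rewrite Ke0 h1.
split.
- by rewrite mulf_neq0 ?invr_eq0.
- have -> : mR (p 2 / p 1) = Ke * (p 0 + p 1 + p 2) / p 1.
    by rewrite hp0 /mR; field; rewrite Ke0 h1.
  by rewrite !mulf_neq0 ?invr_eq0.
- transitivity (- Ke * ((2 * a0 + a2) * (p 0 + p 1 + p 2) - (a0 + a1 + a2) * (2 * p 0 + p 2)) / p 1).
    by rewrite hp0 /mQ; field; rewrite Ke0 h1.
  by rewrite E1 subrr mulr0 mul0r.
- exists (p 1); split => //; apply: ord3P; rewrite /pt ?mk3_0 ?mk3_1 ?mk3_2.
  + by rewrite hp0; field; rewrite Ke0 h1.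
  + by rewrite mulr1.
  + by field.
Qed.

Lemma count_lemma (zs : seq C) : uniq zs ->
  (forall z, z \in zs -> [/\ z != 0, mR z != 0 & mQ z = 0]) ->
  (forall z, z != 0 -> mR z != 0 -> mQ z = 0 -> z \in zs) ->
  num_critical F u (size zs).
Proof.
move=> uz hin hcomp; exists (map pt zs); split.
- by rewrite size_map.
- move=> k hk; rewrite (nth_map 0) //; apply/crit_iff.
  by case: (hin _ (mem_nth 0 hk)) => *; apply: pt_crit.
- move=> i j hi hj ne; rewrite !(nth_map 0) // => -[c [c0 hc]].
  have := hc 1; have := hc 2; rewrite /pt !mk3_1 !mk3_2 mulr1 => e2 e1.
  rewrite -e1 mul1r in e2; apply: ne; apply/eqP; rewrite -(nth_uniq 0 hi hj uz).
  by rewrite e2.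
- move=> p /crit_iff /crit_pt [z0 R0 Q0 pe].
  have zin := hcomp _ z0 R0 Q0.
  exists (index (p 2 / p 1) zs); first by rewrite index_mem.
  by rewrite (nth_map 0) ?index_mem // nth_index.
Qed.

End Count.
End Conic.
Definition gpoly (C : numClosedFieldType) (Ke : C) : {mpoly C[3]} :=
  ('X_0 + 'X_1 + 'X_2) * ((2 : C)%:MP * 'X_0 + 'X_2) * ((2 : C)%:MP * 'X_1 + 'X_2) *
  ((Ke ^+ 2)%:MP * ('X_0 - 'X_1) ^+ 2 + (4 * Ke)%:MP * (((2 : C)%:MP * 'X_0 + 'X_2) * ((2 : C)%:MP * 'X_1 + 'X_2))).

Lemma geval (C : numClosedFieldType) (Ke : C) (v : 'I_3 -> C) : (gpoly Ke).@[v] =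
  (v 0 + v 1 + v 2) * (2 * v 0 + v 2) * (2 * v 1 + v 2) *
  (Ke ^+ 2 * (v 0 - v 1) ^+ 2 + 4 * Ke * ((2 * v 0 + v 2) * (2 * v 1 + v 2))).
Proof. by rewrite /gpoly !(mevalM, mevalD, mevalB, mevalN, mevalC, mevalXU, rmorphXn). Qed.

Lemma gne0 (C : numClosedFieldType) (Ke : C) : Ke != 0 -> gpoly Ke != 0.
Proof.
move=> K0; apply/eqP => h; have := congr1 (meval (mk3 1 1 0)) h.
rewrite geval meval0 !mk3_0 !mk3_1 !mk3_2 => e.
have : (128 : C) * Ke = 0 by rewrite -e; ring.
by apply/eqP; rewrite mulf_neq0 // pnatr_eq0.
Qed.

Lemma QR_conflict (C : numClosedFieldType) (Ke : C) u z : mQ Ke u z = 0 -> mR Ke z = 0 ->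
  Ke * ((u 0)%:R + (u 1)%:R + (u 2)%:R) * (z + 2) = 0.
Proof.
move=> hQ hR; transitivity (- (mQ Ke u z - (2 * (u 1)%:R + (u 2)%:R) * mR Ke z)).
  by rewrite /mQ /mR; ring.
by rewrite hQ hR mulr0 subrr oppr0.
Qed.

Unset Implicit Arguments.
Theorem mainTheorem2 (C : numClosedFieldType) (Ke : C) :
  ML_degree_is (chem_conic Ke)
    (if Ke == 4 then 1%N else if Ke == 0 then 0%N else 2%N).
Proof.
have n4 : (4 : C) != 0 by rewrite pnatr_eq0.
have n2 : (2 : C) != 0 by rewrite pnatr_eq0.
case: (eqVneq Ke 0) => [->|K0].
  rewrite eq_sym (negPf n4) ?eqxx; exists 1; split; first exact: oner_neq0.
  move=> u _; exists [::]; split => // p /crit_iff [_ _ h2 _ [hF _]].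
  have : p 2 ^+ 2 == 0 by rewrite -hF mul0r.
  by rewrite expf_eq0 /= (negPf h2).
exists (gpoly Ke); split; first exact: gne0.
move=> u; rewrite geval /= !mulf_eq0 !negb_or => /andP[/andP[/andP[hN hm] hm'] hD].
set a0 : C := (u 0)%:R in hN hm hm' hD *; set a1 : C := (u 1)%:R in hN hm hm' hD *.
set a2 : C := (u 2)%:R in hN hm hm' hD *.
case: (eqVneq Ke 4) => [K4|K4].
  pose zs := (2 * (2 * a0 + a2)) / (2 * a1 + a2).
  have fac : forall z, mQ Ke u z = (2 * a1 + a2) * (z + 2) * (z - zs).
    by move=> z; rewrite /mQ /zs K4 -/a0 -/a1 -/a2; field.
  apply: (@count_lemma _ _ u K0 [:: zs]) => //.
    move=> z; rewrite inE => /eqP ->; split.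
    - by rewrite /zs !mulf_neq0 ?invr_eq0.
    - have -> : mR Ke zs = (4 * (a0 + a1 + a2) / (2 * a1 + a2)) ^+ 2.
        by rewrite /mR /zs K4; field.
      by rewrite expf_neq0 // !mulf_neq0 ?invr_eq0.
    - by rewrite fac subrr mulr0.
  move=> z z0 R0; rewrite fac => /eqP; rewrite !mulf_eq0 (negPf hm') /= => /orP[|].
    move=> /eqP e; exfalso; move/eqP: R0; apply.
    have -> : z = -2 by move/eqP: e; rewrite addr_eq0 => /eqP.
    by rewrite /mR K4; ring.
  by rewrite subr_eq0 inE.
set D := Ke ^+ 2 * (a0 - a1) ^+ 2 + 4 * Ke * ((2 * a0 + a2) * (2 * a1 + a2)) in hD.
pose de := sqrtC D.
have deK : de ^+ 2 = D by rewrite /de sqrtCK.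
have de0 : de != 0 by apply/eqP => e; move: hD; rewrite -deK e expr0n eqxx.
pose z1 := (Ke * (a0 - a1) + de) / (2 * (2 * a1 + a2)).
pose z2 := (Ke * (a0 - a1) - de) / (2 * (2 * a1 + a2)).
have fac : forall z, mQ Ke u z = (2 * a1 + a2) * (z - z1) * (z - z2).
  move=> z; transitivity ((2 * a1 + a2) * (z - z1) * (z - z2) + (de ^+ 2 - D) / (4 * (2 * a1 + a2))).
    by rewrite /mQ /z1 /z2 /D -/a0 -/a1 -/a2; field.
  by rewrite deK subrr mul0r addr0.
rewrite /=.
apply: (@count_lemma _ _ u K0 [:: z1; z2]).
- rewrite /= andbT inE; apply/eqP => e.
  have : z1 - z2 = de / (2 * a1 + a2) by rewrite /z1 /z2; field.
  by rewrite e subrr => /esym/eqP; rewrite mulf_eq0 invr_eq0 (negPf de0) (negPf hm').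
- move=> z hz.
  have Q0 : mQ Ke u z = 0.
    by move: hz; rewrite !inE fac => /orP[] /eqP ->; rewrite subrr ?mulr0 ?mul0r.
  split => //.
  + apply/eqP => e; move: Q0; rewrite e /mQ expr0n /= !mulr0 subrr sub0r -/a0 -/a2 => /eqP; rewrite oppr_eq0 => /eqP.
    by apply/eqP; rewrite mulf_neq0.
  + apply/eqP => R0; have := QR_conflict Q0 R0; rewrite -/a0 -/a1 -/a2.
    move/eqP; rewrite !mulf_eq0 (negPf K0) (negPf hN) /= => /eqP e.
    move/eqP: K4; apply.
    have ez : z = -2 by move/eqP: e; rewrite addr_eq0 => /eqP.
    apply/eqP; rewrite -subr_eq0; apply/eqP; rewrite -oppr0 -R0 /mR ez; ring.
- move=> z _ _; rewrite fac => /eqP; rewrite !mulf_eq0 (negPf hm') /= !subr_eq0 => /orP[] /eqP ->.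
  + by rewrite !inE eqxx.
  + by rewrite !inE eqxx orbT.
Qed.
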